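(* Let $A$ be a $k$-algebra and let $\psi:P_\bullet\to P'_\bullet$ be an injective chain map of $A$-bimodule resolutions of $A$ lifting the identity map on $A$. If $P'_n/\operatorname{Im}\psi_n$ is projective as an $A$-bimodule for each $n$, then there exists a chain map $\psi':P'_\bullet\to P_\bullet$ (lifting the identity on $A$) with $\psi'\psi=1_P$. If $A$ is a graded algebra with $P_\bullet,P'_\bullet$ graded resolutions and $\psi$ a graded map, then $\psi'$ can be chosen to be graded.
   Context: A bimodule resolution of $A$ is a complex $P_\bullet$ ($n\ge0$) of $A$-bimodules with bimodule differentials and an augmentation $P_0\to A$ such that the augmented complex is exact. A chain map lifting the identity on $A$ is a chain map of bimodule complexes commuting with the augmentations. *)

(* Defs.v *)
From HB Require Import structures.
From mathcomp Require Import all_boot all_order all_algebra.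
Set Implicit Arguments. Unset Strict Implicit. Unset Printing Implicit Defensive.
Import GRing.Theory.
Local Open Scope ring_scope.

Section Bimodules.
Variables (k : fieldType) (A : algType k).

(* An A-bimodule over the k-algebra A: an additive group with commuting left
   and right A-actions, unital, associative, biadditive, and on which k acts
   centrally (c%:A m = m c%:A), i.e. a module over A (x)_k A^op. *)
Record bimod := Bimod {
  bm_car :> zmodType;
  bm_l : A -> bm_car -> bm_car;
  bm_r : bm_car -> A -> bm_car;
  bm_lDa : forall a b m, bm_l (a + b) m = bm_l a m + bm_l b m;
  bm_lDm : forall a m n, bm_l a (m + n) = bm_l a m + bm_l a n;
  bm_rDa : forall m a b, bm_r m (a + b) = bm_r m a + bm_r m b;
  bm_rDm : forall m n a, bm_r (m + n) a = bm_r m a + bm_r n a;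
  bm_l1 : forall m, bm_l 1 m = m;
  bm_r1 : forall m, bm_r m 1 = m;
  bm_lM : forall a b m, bm_l (a * b) m = bm_l a (bm_l b m);
  bm_rM : forall m a b, bm_r m (a * b) = bm_r (bm_r m a) b;
  bm_lr : forall a m b, bm_l a (bm_r m b) = bm_r (bm_l a m) b;
  bm_central : forall (c : k) m, bm_l (c%:A) m = bm_r m (c%:A)
}.

Lemma reg_central (c : k) (m : A) : c%:A * m = m * c%:A.
Proof. by rewrite mulr_algl mulr_algr. Qed.

Definition regbimod : bimod :=
  @Bimod A (fun a m => a * m) (fun m a => m * a)
    (fun a b m => mulrDl a b m) (fun a m n => mulrDr a m n)
    (fun m a b => mulrDr m a b) (fun m n a => mulrDl m n a)
    (fun m => mul1r m) (fun m => mulr1 m)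
    (fun a b m => esym (mulrA a b m)) (fun m a b => mulrA m a b)
    (fun a m b => mulrA a m b) reg_central.

Definition is_bhom (M N : bimod) (f : M -> N) : Prop :=
  [/\ forall x y, f (x + y) = f x + f y,
      forall a x, f (bm_l a x) = bm_l a (f x)
    & forall x a, f (bm_r x a) = bm_r (f x) a].

Definition projective_bimod (Q : bimod) : Prop :=
  forall (M N : bimod) (g : M -> N) (f : Q -> N),
    is_bhom g -> (forall y, exists x, g x = y) -> is_bhom f ->
    exists h : Q -> M, is_bhom h /\ forall q, g (h q) = f q.

Record aug_complex := AugComplex {
  cx_obj : nat -> bimod;
  cx_d : forall n, cx_obj n.+1 -> cx_obj n;
  cx_eps : cx_obj 0 -> regbimod
}.

Definition is_bimod_resolution (P : aug_complex) : Prop :=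
  [/\ forall n, is_bhom (@cx_d P n),
      is_bhom (@cx_eps P),
      forall a : A, exists x, @cx_eps P x = a,
      forall x : cx_obj P 0, @cx_eps P x = 0 <-> exists y, @cx_d P 0 y = x
    & forall n (x : cx_obj P n.+1), @cx_d P n x = 0 <-> exists y, @cx_d P n.+1 y = x].

Definition is_chain_map_lifting_id (P P' : aug_complex)
    (f : forall n, cx_obj P n -> cx_obj P' n) : Prop :=
  [/\ forall n, is_bhom (f n),
      forall n x, @cx_d P' n (f n.+1 x) = f n (@cx_d P n x)
    & forall x, @cx_eps P' (f 0 x) = @cx_eps P x].

(* G i is the set of homogeneous elements of degree i; M = (+)_i G i *)
Definition is_grading (M : zmodType) (G : int -> M -> Prop) : Prop :=
  [/\ forall i, G i 0,
      forall i x y, G i x -> G i y -> G i (x - y),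
      forall m, exists (s : seq int) (x : int -> M),
                  (forall i, G i (x i)) /\ m = \sum_(i <- s) x i
    & forall (s : seq int) (x : int -> M), uniq s -> (forall i, G i (x i)) ->
        \sum_(i <- s) x i = 0 -> forall i, i \in s -> x i = 0].

Definition graded_algebra (GA : int -> A -> Prop) : Prop :=
  [/\ is_grading GA,
      forall i (c : k) a, GA i a -> GA i (c *: a),
      forall i j a b, GA i a -> GA j b -> GA (i + j) (a * b)
    & GA 0 1].

Definition graded_bimod (GA : int -> A -> Prop) (M : bimod)
    (G : int -> M -> Prop) : Prop :=
  [/\ is_grading G,
      forall i j a m, GA i a -> G j m -> G (i + j) (bm_l a m)
    & forall i j a m, GA i a -> G j m -> G (i + j) (bm_r m a)].

Definition graded_map (M N : Type) (GM : int -> M -> Prop)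
    (GN : int -> N -> Prop) (f : M -> N) : Prop :=
  forall i m, GM i m -> GN i (f m).

Definition graded_resolution (GA : int -> A -> Prop) (P : aug_complex)
    (GP : forall n, int -> cx_obj P n -> Prop) : Prop :=
  [/\ forall n, graded_bimod GA (GP n),
      forall n, graded_map (GP n.+1) (GP n) (@cx_d P n)
    & graded_map (GP 0) GA (@cx_eps P)].

End Bimodules.
Arguments cx_d {k A} _ _ _.
Arguments cx_eps {k A} _ _.
Arguments is_chain_map_lifting_id {k A} P P' f.

(* Main.v *)
Require Import Defs.
From HB Require Import structures.
From mathcomp Require Import all_boot all_order all_algebra.
From Stdlib Require Import ClassicalEpsilon.
Set Implicit Arguments. Unset Strict Implicit. Unset Printing Implicit Defensive.
Import GRing.Theory.
Local Open Scope ring_scope.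

Definition pb (P : Prop) : bool := if excluded_middle_informative P then true else false.
Lemma pbP (P : Prop) : reflect P (pb P).
Proof. rewrite /pb; case: excluded_middle_informative => h; by constructor. Qed.

Section Sub.
Variables (k : fieldType) (A : algType k) (N : bimod A) (S : N -> Prop).
Hypotheses (S0 : S 0) (SB : forall x y, S x -> S y -> S (x - y))
  (Sl : forall a x, S x -> S (bm_l a x)) (Sr : forall x a, S x -> S (bm_r x a)).

Definition subcar := {x : N | pb (S x)}.
HB.instance Definition _ := Choice.on subcar.
Lemma sS (u : subcar) : S (val u). Proof. exact/pbP/(valP u). Qed.
Definition smk (x : N) (h : S x) : subcar := exist _ x (introT (pbP _) h).
Definition szero : subcar := smk S0.
Lemma SN x : S x -> S (- x). Proof. by move=> h; rewrite -sub0r; apply: SB. Qed.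
Lemma SD x y : S x -> S y -> S (x + y).
Proof. by move=> hx hy; rewrite -[y]opprK; apply: SB => //; apply: SN. Qed.
Definition sopp (u : subcar) : subcar := smk (SN (sS u)).
Definition sadd (u v : subcar) : subcar := smk (SD (sS u) (sS v)).
Lemma saddA : associative sadd. Proof. by move=> x y z; apply: val_inj; rewrite /= addrA. Qed.
Lemma saddC : commutative sadd. Proof. by move=> x y; apply: val_inj; rewrite /= addrC. Qed.
Lemma sadd0 : left_id szero sadd. Proof. by move=> x; apply: val_inj; rewrite /= add0r. Qed.
Lemma saddN : left_inverse szero sopp sadd. Proof. by move=> x; apply: val_inj; rewrite /= addNr. Qed.
HB.instance Definition _ := GRing.isZmodule.Build subcar saddA saddC sadd0 saddN.
Definition sl a (u : subcar) : subcar := smk (Sl a (sS u)).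
Definition sr (u : subcar) a : subcar := smk (Sr a (sS u)).
Definition subbimod : bimod A.
refine (@Bimod _ _ subcar sl sr _ _ _ _ _ _ _ _ _ _).
all: by intros; apply: val_inj; rewrite /= ?(bm_lDa, bm_lDm, bm_rDa, bm_rDm, bm_l1, bm_r1, bm_lM, bm_rM, bm_lr, bm_central).
Defined.
Lemma subval_add (u v : subbimod) : val (u + v : subbimod) = (val u + val v). Proof. by []. Qed.
End Sub.

Section Hom.
Variables (k : fieldType) (A : algType k).
Implicit Types M N Q X Y : bimod A.

Lemma addf0 (M N : zmodType) (f : M -> N) : (forall x y, f (x + y) = f x + f y) -> f 0 = 0.
Proof. move=> h; apply/eqP; rewrite -(addrI (f 0) (_ : f 0 + 0 = f 0 + f 0)) //.
by rewrite -h !addr0. Qed.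
Lemma addfN (M N : zmodType) (f : M -> N) : (forall x y, f (x + y) = f x + f y) -> forall x, f (- x) = - f x.
Proof. move=> h x; apply/eqP; rewrite -(addrI (f x) (_ : f x + f (- x) = f x + - f x)) //.
by rewrite -h subrr addrN (addf0 h). Qed.
Lemma addfB (M N : zmodType) (f : M -> N) : (forall x y, f (x + y) = f x + f y) -> forall x y, f (x - y) = f x - f y.
Proof. by move=> h x y; rewrite h (addfN h). Qed.

Lemma bm_l0 M a : bm_l a (0 : M) = 0. Proof. exact: (addf0 (bm_lDm a)). Qed.
Lemma bm_r0 M a : bm_r (0 : M) a = 0. Proof. exact: (addf0 (fun x y => bm_rDm x y a)). Qed.
Lemma bm_lB M a (x y : M) : bm_l a (x - y) = bm_l a x - bm_l a y. Proof. exact: (addfB (bm_lDm a)). Qed.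
Lemma bm_rB M a (x y : M) : bm_r (x - y) a = bm_r x a - bm_r y a. Proof. exact: (addfB (fun x y => bm_rDm x y a)). Qed.
Lemma bm_0l M (m : M) : bm_l 0 m = 0. Proof. exact: (addf0 (fun a b => bm_lDa a b m)). Qed.
Lemma bm_0r M (m : M) : bm_r m 0 = 0. Proof. exact: (addf0 (fun a b => bm_rDa m a b)). Qed.

Lemma bhom0 M N (f : M -> N) : is_bhom f -> f 0 = 0.
Proof. by case=> h _ _; apply: addf0. Qed.
Lemma bhomB M N (f : M -> N) : is_bhom f -> forall x y, f (x - y) = f x - f y.
Proof. by case=> h _ _; apply: addfB. Qed.
Lemma bhom_sub M N (f g : M -> N) : is_bhom f -> is_bhom g -> is_bhom (fun x => f x - g x).
Proof.
move=> [f1 f2 f3] [g1 g2 g3]; split=> *.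
- by rewrite f1 g1 opprD addrACA.
- by rewrite f2 g2 bm_lB.
- by rewrite f3 g3 bm_rB.
Qed.
Lemma bhom_comp M N X (f : M -> N) (g : N -> X) : is_bhom f -> is_bhom g -> is_bhom (fun x => g (f x)).
Proof. by move=> [f1 f2 f3] [g1 g2 g3]; split=> *; rewrite ?f1 ?g1 ?f2 ?g2 ?f3 ?g3. Qed.

Lemma lift_im Q X Y (e : Y -> X) (g : Q -> X) : projective_bimod Q ->
  is_bhom e -> is_bhom g -> (forall q, exists y, e y = g q) ->
  exists h : Q -> Y, is_bhom h /\ forall q, e (h q) = g q.
Proof.
move=> pQ he hg im.
pose S := fun x : X => exists y, e y = x.
have S0 : S 0 by exists 0; apply: bhom0.
have SB : forall x y, S x -> S y -> S (x - y).
  by move=> _ _ [y1 <-] [y2 <-]; exists (y1 - y2); apply: bhomB.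
have Sl : forall a x, S x -> S (bm_l a x).
  by move=> a _ [y <-]; exists (bm_l a y); case: he.
have Sr : forall x a, S x -> S (bm_r x a).
  by move=> _ a [y <-]; exists (bm_r y a); case: he.
pose Z := subbimod S0 SB Sl Sr.
pose e' : Y -> Z := fun y => smk (S:=S) (ex_intro _ y erefl).
pose g' : Q -> Z := fun q => smk (S:=S) (im q).
have he' : is_bhom e'.
  by case: he => h1 h2 h3; split=> *; apply: val_inj; rewrite /= ?h1 ?h2 ?h3.
have hg' : is_bhom g'.
  by case: hg => h1 h2 h3; split=> *; apply: val_inj; rewrite /= ?h1 ?h2 ?h3.
have sur : forall z : Z, exists y, e' y = z.
  move=> z; have [y hy] := sS z; exists y; exact: val_inj.
have [h [hh1 hh2]] := pQ _ _ e' g' he' sur hg'.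
exists h; split=> // q; have := congr1 val (hh2 q); done.
Qed.

Lemma retract_ex N M Q (psi : N -> M) (pi : M -> Q) :
  is_bhom psi -> (forall x y, psi x = psi y -> x = y) ->
  is_bhom pi -> (forall q, exists x, pi x = q) ->
  (forall x, pi x = 0 <-> exists y, psi y = x) -> projective_bimod Q ->
  exists r : M -> N, is_bhom r /\ forall x, r (psi x) = x.
Proof.
move=> hpsi inj hpi sur ker pQ.
have hid : is_bhom (fun q : Q => q) by [].
have [s [hs spi]] := pQ _ _ pi (fun q => q) hpi sur hid.
have ex : forall x : M, exists y, psi y = x - s (pi x).
  by move=> x; apply/ker; rewrite bhomB // spi subrr.
pose r x := proj1_sig (constructive_indefinite_description _ (ex x)).
have rP : forall x, psi (r x) = x - s (pi x).
  by move=> x; rewrite /r; case: constructive_indefinite_description.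
exists r; split.
- case: hpsi => p1 p2 p3; case: hpi => q1 q2 q3; case: hs => s1 s2 s3.
  split=> *; apply: inj; rewrite ?p1 ?p2 ?p3 !rP ?q1 ?q2 ?q3 ?s1 ?s2 ?s3.
  + by rewrite opprD addrACA.
  + by rewrite bm_lB.
  + by rewrite bm_rB.
- move=> x; apply: inj; rewrite rP.
  have -> : pi (psi x) = 0 by apply/ker; exists x.
  by rewrite (bhom0 hs) subr0.
Qed.

Lemma factor_ex N M Q X (psi : N -> M) (pi : M -> Q) (dl : M -> X) :
  is_bhom pi -> (forall q, exists x, pi x = q) ->
  (forall x, pi x = 0 <-> exists y, psi y = x) ->
  is_bhom dl -> (forall y, dl (psi y) = 0) ->
  exists g : Q -> X, is_bhom g /\ forall x, g (pi x) = dl x.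
Proof.
move=> hpi sur ker hd dz.
pose c q := proj1_sig (constructive_indefinite_description _ (sur q)).
have cP : forall q, pi (c q) = q.
  by move=> q; rewrite /c; case: constructive_indefinite_description.
have wd : forall x x', pi x = pi x' -> dl x = dl x'.
  move=> x x' e; have : pi (x - x') = 0 by rewrite bhomB // e subrr.
  case/ker => y hy; apply/eqP; rewrite -subr_eq0 -(bhomB hd) -hy; exact/eqP.
exists (fun q => dl (c q)); split.
- case: hpi => p1 p2 p3; case: hd => d1 d2 d3.
  split=> *.
  + by rewrite -d1; apply: wd; rewrite p1 !cP.
  + by rewrite -d2; apply: wd; rewrite p2 !cP.
  + by rewrite -d3; apply: wd; rewrite p3 !cP.
- by move=> x; apply: wd; rewrite cP.
Qed.
End Hom.
Unset Implicit Arguments.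
Section Main.
Variables (k : fieldType) (A : algType k) (P P' : aug_complex A)
  (psi : forall n, cx_obj P n -> cx_obj P' n).
Hypotheses (hP : is_bimod_resolution P) (hP' : is_bimod_resolution P')
  (hpsi : is_chain_map_lifting_id P P' psi)
  (inj : forall n (x y : cx_obj P n), psi n x = psi n y -> x = y)
  (hQ : forall n, exists (Q : bimod A) (pi : cx_obj P' n -> Q),
      [/\ is_bhom pi, (forall q, exists x, pi x = q),
          (forall x, pi x = 0 <-> exists y, psi n y = x)
        & projective_bimod Q]).

Definition Inv n (f : cx_obj P' n -> cx_obj P n) :=
  [/\ is_bhom f, forall x, f (psi n x) = x &
      forall x : cx_obj P' n.+1, exists y, cx_d P n y = f (cx_d P' n x)].

Lemma base_ex : exists f, Inv 0 f /\ forall x, cx_eps P (f x) = cx_eps P' x.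
Proof.
case: hP => hd he hsur hex0 hexn; case: hP' => hd' he' hsur' hex0' hexn'.
case: hpsi => hb hc hpe.
have [Q [pi [hpi spi kpi pQ]]] := hQ 0.
have [r [hr rpsi]] := retract_ex (hb 0) (inj 0) hpi spi kpi pQ.
have hdl := bhom_sub (bhom_comp hr he) he'.
have [g [hg gpi]] := factor_ex hpi spi kpi hdl (fun y => ltac:(by rewrite /= rpsi hpe subrr)).
have [h [hh hgh]] := lift_im pQ he hg (fun q => hsur (g q)).
have hf := bhom_sub hr (bhom_comp hpi hh).
have eq1 : forall x, cx_eps P (r x - h (pi x)) = cx_eps P' x.
  by move=> x; rewrite (bhomB he) hgh gpi opprB addrC subrK.
exists (fun x => r x - h (pi x)); split=> //; split=> //.
- move=> x; have -> : pi (psi 0 x) = 0 by apply/kpi; exists x.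
  by rewrite (bhom0 hh) subr0 rpsi.
- move=> x; apply/hex0; rewrite eq1; apply/hex0'; by exists x.
Qed.

Lemma step_ex n f : Inv n f -> exists f', Inv n.+1 f' /\
   forall x, cx_d P n (f' x) = f (cx_d P' n x).
Proof.
case=> hf fpsi fK.
case: hP => hd he hsur hex0 hexn; case: hP' => hd' he' hsur' hex0' hexn'.
case: hpsi => hb hc hpe.
have [Q [pi [hpi spi kpi pQ]]] := hQ n.+1.
have [r [hr rpsi]] := retract_ex (hb n.+1) (inj n.+1) hpi spi kpi pQ.
have hdl := bhom_sub (bhom_comp hr (hd n)) (bhom_comp (hd' n) hf).
have [g [hg gpi]] := factor_ex hpi spi kpi hdl (fun y => ltac:(by rewrite /= rpsi hc fpsi subrr)).
have im : forall q, exists y, cx_d P n y = g q.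
  move=> q; have [x <-] := spi q; have [y hy] := fK x.
  by exists (r x - y); rewrite gpi (bhomB (hd n)) hy.
have [h [hh hgh]] := lift_im pQ (hd n) hg im.
have hf' := bhom_sub hr (bhom_comp hpi hh).
have eq1 : forall x, cx_d P n (r x - h (pi x)) = f (cx_d P' n x).
  by move=> x; rewrite (bhomB (hd n)) hgh gpi opprB addrC subrK.
exists (fun x => r x - h (pi x)); split=> //; split=> //.
- move=> x; have -> : pi (psi n.+1 x) = 0 by apply/kpi; exists x.
  by rewrite (bhom0 hh) subr0 rpsi.
- move=> x; apply/hexn; rewrite eq1.
  have -> : cx_d P' n (cx_d P' n.+1 x) = 0 by apply/hexn'; exists x.
  exact: bhom0.
Qed.

Definition base_s := constructive_indefinite_description _ base_ex.
Definition step_s n (f : {f | Inv n f}) := constructive_indefinite_description _ (step_ex n (proj1_sig f) (proj2_sig f)).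
Fixpoint build n : {f : cx_obj P' n -> cx_obj P n | Inv n f} :=
  match n with
  | 0 => exist _ (proj1_sig base_s) (proj1 (proj2_sig base_s))
  | n'.+1 => let s := step_s n' (build n') in exist _ (proj1_sig s) (proj1 (proj2_sig s))
  end.

Lemma ungraded : exists psi' : forall n, cx_obj P' n -> cx_obj P n,
      is_chain_map_lifting_id P' P psi' /\ forall n x, psi' n (psi n x) = x.
Proof.
exists (fun n => proj1_sig (build n)); split; first split.
- by move=> n; case: (proj2_sig (build n)).
- by move=> n x /=; exact: (proj2 (proj2_sig (step_s n (build n)))).
- exact: (proj2 (proj2_sig base_s)).
- by move=> n; case: (proj2_sig (build n)).
Qed.
End Main.
Set Implicit Arguments.
Section Grad.
Variables (M : zmodType) (G : int -> M -> Prop).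

Definition hdec (m : M) : seq int * (int -> M) :=
  match excluded_middle_informative (exists p : seq int * (int -> M),
     [/\ uniq p.1, forall i, G i (p.2 i) & m = \sum_(i <- p.1) p.2 i]) with
  | left H => proj1_sig (constructive_indefinite_description _ H)
  | right _ => ([::], fun _ => 0) end.
Definition supp m := (hdec m).1.
Definition comp i m := (hdec m).2 i *+ (i \in supp m).

Hypothesis hG : is_grading G.

Lemma G0 i : G i 0. Proof. by case: hG. Qed.
Lemma GB i x y : G i x -> G i y -> G i (x - y). Proof. by case: hG => _ h _ _; apply: h. Qed.
Lemma GN i x : G i x -> G i (- x). Proof. by move=> h; rewrite -sub0r; apply: GB => //; apply: G0. Qed.
Lemma GD i x y : G i x -> G i y -> G i (x + y).
Proof. by move=> hx hy; rewrite -[y]opprK; apply: GB => //; apply: GN. Qed.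
Lemma GMn i x n : G i x -> G i (x *+ n).
Proof. move=> h; elim: n => [|n IH]; first by rewrite mulr0n; apply: G0.
by rewrite mulrS; apply: GD. Qed.

Lemma hdecP m : [/\ uniq (supp m), forall i, G i ((hdec m).2 i) &
   m = \sum_(i <- supp m) (hdec m).2 i].
Proof.
rewrite /supp /hdec; case: excluded_middle_informative => [H|H].
  by case: constructive_indefinite_description => p.
exfalso; apply: H; case: hG => _ _ hex _; have [s [x [hx ->]]] := hex m.
exists (undup s, fun i => x i *+ count_mem i s); split => //=.
- exact: undup_uniq.
- by move=> i; apply: GMn.
- by rewrite -big_undup_iterop_count.
Qed.

Lemma sum_sub (t t' : seq int) (F : int -> M) : uniq t -> uniq t' -> {subset t <= t'} ->
  (forall i, i \notin t -> F i = 0) -> \sum_(i <- t') F i = \sum_(i <- t) F i.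
Proof.
move=> ut ut' sub F0.
rewrite (eq_bigr (fun i => if i \in t then F i else 0)); last first.
  by move=> i _; case: ifP => // /negbT /F0.
rewrite -big_mkcond -big_filter; apply: perm_big; apply: uniq_perm => //.
  exact: filter_uniq.
by move=> i; rewrite mem_filter; case: (boolP (i \in t)) => // /sub ->.
Qed.

Lemma sum_eq2 (t t' : seq int) (F : int -> M) : uniq t -> uniq t' ->
  (forall i, i \notin t -> F i = 0) -> (forall i, i \notin t' -> F i = 0) ->
  \sum_(i <- t) F i = \sum_(i <- t') F i.
Proof.
move=> u u' h h'; rewrite -(@sum_sub t (undup (t ++ t'))) ?undup_uniq //; last first.
  by move=> i; rewrite mem_undup mem_cat => ->.
rewrite (@sum_sub t' (undup (t ++ t'))) ?undup_uniq //.
by move=> i; rewrite mem_undup mem_cat => ->; rewrite orbT.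
Qed.

Lemma compG i m : G i (comp i m).
Proof. by apply: GMn; case: (hdecP m). Qed.
Lemma comp_out i m : i \notin supp m -> comp i m = 0.
Proof. by rewrite /comp => /negbTE ->. Qed.
Lemma supp_uniq m : uniq (supp m). Proof. by case: (hdecP m). Qed.
Lemma comp_exp m : m = \sum_(i <- supp m) comp i m.
Proof. case: (hdecP m) => _ _ {1}->; apply: eq_big_seq => i h; by rewrite /comp h. Qed.
Lemma comp_expt t m : uniq t -> (forall i, i \notin t -> comp i m = 0) ->
  m = \sum_(i <- t) comp i m.
Proof.
move=> ut h; rewrite {1}(comp_exp m); apply: sum_eq2 => //.
- exact: supp_uniq.
- by move=> i; apply: comp_out.
Qed.

Lemma compU t (y : int -> M) m : uniq t -> (forall i, G i (y i)) ->
  (forall i, i \notin t -> y i = 0) -> m = \sum_(i <- t) y i -> forall i, comp i m = y i.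
Proof.
move=> ut hy yo me.
pose t' := undup (t ++ supp m).
have ut' : uniq t' by apply: undup_uniq.
have z0 : forall i, i \in t' -> comp i m - y i = 0.
  case: hG => _ _ _ hu; apply: hu => //.
  - by move=> i; apply: GB; [apply: compG | apply: hy].
  - rewrite sumrB -(@comp_expt t') //; last first.
      by move=> i; rewrite mem_undup mem_cat negb_or => /andP [_ h]; apply: comp_out.
    rewrite (@sum_sub t) ?me ?subrr //.
    by move=> i; rewrite mem_undup mem_cat => ->.
move=> i; case: (boolP (i \in t')) => [/z0 /eqP|].
  by rewrite subr_eq0 => /eqP.
rewrite mem_undup mem_cat negb_or => /andP [h1 h2].
by rewrite comp_out // yo.
Qed.

Lemma comp0 i : comp i 0 = 0.
Proof. by apply: (@compU [::] (fun _ => 0)) => //; rewrite ?big_nil // => *; apply: G0. Qed.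

Lemma compD i m n : comp i (m + n) = comp i m + comp i n.
Proof.
pose t := undup (supp m ++ supp n).
have ut : uniq t by apply: undup_uniq.
have hout : forall i, i \notin t -> i \notin supp m /\ i \notin supp n.
  by move=> j; rewrite mem_undup mem_cat negb_or => /andP.
apply: (@compU t (fun i => comp i m + comp i n)) => //.
- by move=> j; apply: GD; apply: compG.
- by move=> j /hout [h1 h2]; rewrite !comp_out // addr0.
- rewrite big_split /= -!comp_expt //.
  + by move=> j /hout [_ h]; apply: comp_out.
  + by move=> j /hout [h _]; apply: comp_out.
Qed.

Lemma compN i m : comp i (- m) = - comp i m.
Proof. by apply: addfN => x y; apply: compD. Qed.
Lemma compB i m n : comp i (m - n) = comp i m - comp i n.
Proof. by rewrite compD compN. Qed.

Lemma comp_hom j x i : G j x -> comp i x = if i == j then x else 0.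
Proof.
move=> hx; apply: (@compU [:: j] (fun i => if i == j then x else 0)) => //.
- by move=> l; case: eqP => [->|_] //; apply: G0.
- by move=> l; rewrite inE => /negbTE ->.
- by rewrite big_cons big_nil eqxx addr0.
Qed.

Lemma comp_comp i j m : comp i (comp j m) = if i == j then comp j m else 0.
Proof. exact/comp_hom/compG. Qed.

Lemma comp_ext m n : (forall i, comp i m = comp i n) -> m = n.
Proof.
move=> h; apply/eqP; rewrite -subr_eq0; apply/eqP.
rewrite (comp_exp (m - n)) big1_seq // => i _; by rewrite compB h subrr.
Qed.

Lemma homog_of i y : (forall j, j != i -> comp j y = 0) -> G i y.
Proof.
move=> h; have -> : y = comp i y; last exact: compG.
apply: comp_ext => j; rewrite comp_comp; case: eqP => [->//|/eqP /h //].
Qed.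

Lemma comp_sum (I : Type) (r : seq I) (F : I -> M) i :
  comp i (\sum_(j <- r) F j) = \sum_(j <- r) comp i (F j).
Proof. exact: (big_morph _ (compD i) (comp0 i)). Qed.
End Grad.
Section GradMaps.
Variables (k : fieldType) (A : algType k) (GA : int -> A -> Prop).
Hypothesis hGA : graded_algebra GA.

Lemma comp_graded (M N : zmodType) (G : int -> M -> Prop) (G' : int -> N -> Prop) (f : M -> N) :
  is_grading G -> is_grading G' -> (forall x y, f (x + y) = f x + f y) ->
  graded_map G G' f -> forall i m, comp G' i (f m) = f (comp G i m).
Proof.
move=> hG hG' fa fg i m.
apply: (@compU _ _ hG' (supp G m) (fun i => f (comp G i m))).
- exact: supp_uniq.
- by move=> j; apply: fg; apply: compG.
- by move=> j h; rewrite comp_out // (addf0 fa).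
- by rewrite {1}(comp_exp hG m) (big_morph _ fa (addf0 fa)).
Qed.

Lemma comp_bml (M : bimod A) (G : int -> M -> Prop) : graded_bimod GA G ->
  forall j a (m : M) i, GA j a -> comp G i (bm_l a m) = bm_l a (comp G (i - j) m).
Proof.
case=> hG gl gr j a m i ha.
apply: (@compU _ _ hG [seq j + l | l <- supp G m] (fun i => bm_l a (comp G (i - j) m))).
- by rewrite map_inj_uniq ?supp_uniq //; apply: addrI.
- by move=> i0; have := gl j (i0 - j) a _ ha (compG hG _ m); rewrite addrC subrK.
- move=> i0 h; rewrite comp_out ?bm_l0 //; apply: contra h => h.
  by rewrite -[i0](addrNK j) addrC; apply: map_f.
- rewrite big_map (eq_bigr (fun l => bm_l a (comp G l m))); last first.
    by move=> l _; rewrite (addrC j l) addrK.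
  by rewrite {1}(comp_exp hG m) (big_morph _ (bm_lDm a) (bm_l0 _ a)).
Qed.

Lemma comp_bmr (M : bimod A) (G : int -> M -> Prop) : graded_bimod GA G ->
  forall j a (m : M) i, GA j a -> comp G i (bm_r m a) = bm_r (comp G (i - j) m) a.
Proof.
case=> hG gl gr j a m i ha.
apply: (@compU _ _ hG [seq j + l | l <- supp G m] (fun i => bm_r (comp G (i - j) m) a)).
- by rewrite map_inj_uniq ?supp_uniq //; apply: addrI.
- by move=> i0; have := gr j (i0 - j) a _ ha (compG hG _ m); rewrite addrC subrK.
- move=> i0 h; rewrite comp_out ?bm_r0 //; apply: contra h => h.
  by rewrite -[i0](addrNK j) addrC; apply: map_f.
- rewrite big_map (eq_bigr (fun l => bm_r (comp G l m) a)); last first.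
    by move=> l _; rewrite (addrC j l) addrK.
  by rewrite {1}(comp_exp hG m) (big_morph _ (fun x y => bm_rDm x y a) (bm_r0 _ a)).
Qed.

Definition hz (M N : zmodType) (G : int -> M -> Prop) (G' : int -> N -> Prop) (f : M -> N) m :=
  \sum_(i <- supp G m) comp G' i (f (comp G i m)).

Lemma comp_hz (M N : zmodType) (G : int -> M -> Prop) (G' : int -> N -> Prop) (f : M -> N) :
  is_grading G -> is_grading G' -> f 0 = 0 ->
  forall j m, comp G' j (hz G G' f m) = comp G' j (f (comp G j m)).
Proof.
move=> hG hG' f0 j m.
apply: (@compU _ _ hG' (supp G m) (fun i => comp G' i (f (comp G i m)))) => //.
- exact: supp_uniq.
- by move=> i; apply: compG.
- by move=> i h; rewrite [comp G i m]comp_out // f0 comp0.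
Qed.

Section HZ.
Variables (M N : bimod A) (G : int -> M -> Prop) (G' : int -> N -> Prop) (f : M -> N).
Hypotheses (gM : graded_bimod GA G) (gN : graded_bimod GA G') (hf : is_bhom f).
Let hG : is_grading G. Proof. by case: gM. Qed.
Let hG' : is_grading G'. Proof. by case: gN. Qed.
Let f0 : f 0 = 0. Proof. exact: bhom0. Qed.

Lemma hz_add x y : hz G G' f (x + y) = hz G G' f x + hz G G' f y.
Proof.
apply: (comp_ext hG') => i; rewrite compD // !comp_hz // compD //.
by case: hf => h _ _; rewrite h compD.
Qed.

Lemma hz_l_hom j a m : GA j a -> hz G G' f (bm_l a m) = bm_l a (hz G G' f m).
Proof.
move=> ha; apply: (comp_ext hG') => i.
rewrite comp_hz // (comp_bml gM _ _ ha) (comp_bml gN _ _ ha) comp_hz //.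
by case: hf => _ h _; rewrite h (comp_bml gN _ _ ha).
Qed.

Lemma hz_r_hom j a m : GA j a -> hz G G' f (bm_r m a) = bm_r (hz G G' f m) a.
Proof.
move=> ha; apply: (comp_ext hG') => i.
rewrite comp_hz // (comp_bmr gM _ _ ha) (comp_bmr gN _ _ ha) comp_hz //.
by case: hf => _ _ h; rewrite h (comp_bmr gN _ _ ha).
Qed.

Lemma hz_bhom : is_bhom (hz G G' f).
Proof.
have hGA0 : is_grading GA by case: hGA.
have hz0 : hz G G' f 0 = 0 by apply: addf0; apply: hz_add.
split.
- exact: hz_add.
- move=> a x; rewrite {1 2}(comp_exp hGA0 a).
  rewrite (big_morph (fun b => bm_l b x) (fun b c => bm_lDa b c x) (bm_0l x)).
  rewrite (big_morph _ hz_add hz0).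
  rewrite (big_morph (fun b => bm_l b _) (fun b c => bm_lDa b c _) (bm_0l _)).
  by apply: eq_bigr => j _; apply: hz_l_hom; apply: compG.
- move=> x a; rewrite {1 2}(comp_exp hGA0 a).
  rewrite (big_morph (fun b => bm_r x b) (fun b c => bm_rDa x b c) (bm_0r x)).
  rewrite (big_morph _ hz_add hz0).
  rewrite (big_morph (fun b => bm_r _ b) (fun b c => bm_rDa _ b c) (bm_0r _)).
  by apply: eq_bigr => j _; apply: hz_r_hom; apply: compG.
Qed.

Lemma hz_graded : graded_map G G' (hz G G' f).
Proof.
move=> i m hm; apply: (homog_of hG') => j hj.
by rewrite comp_hz // (comp_hom hG _ hm) (negbTE hj) f0 comp0.
Qed.
End HZ.
End GradMaps.
Unset Implicit Arguments.
Lemma bhom_add (k : fieldType) (A : algType k) (M N : bimod A) (f : M -> N) :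
  is_bhom f -> forall x y, f (x + y) = f x + f y.
Proof. by case. Qed.

Theorem lemma9p1 (k : fieldType) (A : algType k) (P P' : aug_complex A)
  (psi : forall n, cx_obj P n -> cx_obj P' n) :
  is_bimod_resolution P -> is_bimod_resolution P' ->
  is_chain_map_lifting_id P P' psi ->
  (forall n (x y : cx_obj P n), psi n x = psi n y -> x = y) ->
  (* P'_n / Im psi_n is a projective A-bimodule: it is realized by a cokernel
     Q of psi_n (a surjective bimodule map pi with kernel Im psi_n) *)
  (forall n, exists (Q : bimod A) (pi : cx_obj P' n -> Q),
      [/\ is_bhom pi, (forall q, exists x, pi x = q),
          (forall x, pi x = 0 <-> exists y, psi n y = x)
        & projective_bimod Q]) ->
  (exists psi' : forall n, cx_obj P' n -> cx_obj P n,
      is_chain_map_lifting_id P' P psi' /\ forall n x, psi' n (psi n x) = x)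
  /\
  (forall (GA : int -> A -> Prop)
          (GP : forall n, int -> cx_obj P n -> Prop)
          (GP' : forall n, int -> cx_obj P' n -> Prop),
      graded_algebra GA ->
      graded_resolution GA GP -> graded_resolution GA GP' ->
      (forall n, graded_map (GP n) (GP' n) (psi n)) ->
      exists psi' : forall n, cx_obj P' n -> cx_obj P n,
        [/\ is_chain_map_lifting_id P' P psi',
            forall n, graded_map (GP' n) (GP n) (psi' n)
          & forall n x, psi' n (psi n x) = x]).
Proof.
move=> hP hP' hpsi inj hQ.
have U := ungraded k A P P' psi hP hP' hpsi inj hQ.
split => // GA GP GP' hGA [gb gd ge] [gb' gd' ge'] gpsi.
have [psi' [[hb hc he] hr]] := U.
have hGA0 : is_grading GA by case: hGA.
have hG : forall n, is_grading (GP n) by move=> n; case: (gb n).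
have hG' : forall n, is_grading (GP' n) by move=> n; case: (gb' n).
case: hP => hd hee _ _ _; case: hP' => hd' hee' _ _ _.
case: hpsi => hbp _ _.
exists (fun n => hz (GP' n) (GP n) (psi' n)); split.
- split.
  + by move=> n; apply: (hz_bhom hGA (gb' n) (gb n) (hb n)).
  + move=> n x; apply: (comp_ext (hG n)) => i.
    rewrite (comp_graded (hG n.+1) (hG n) (bhom_add _ _ _ _ _ (hd n)) (gd n)).
    rewrite comp_hz // ?(bhom0 (hb _)) //.
    rewrite -(comp_graded (hG n.+1) (hG n) (bhom_add _ _ _ _ _ (hd n)) (gd n)).
    rewrite hc -(comp_graded (hG' n.+1) (hG' n) (bhom_add _ _ _ _ _ (hd' n)) (gd' n)).
    by rewrite comp_hz // ?(bhom0 (hb _)).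
  + move=> x; apply: (comp_ext hGA0) => i.
    rewrite (comp_graded (hG 0) hGA0 (bhom_add _ _ _ _ _ hee) ge).
    rewrite comp_hz // ?(bhom0 (hb _)) //.
    rewrite -(comp_graded (hG 0) hGA0 (bhom_add _ _ _ _ _ hee) ge).
    by rewrite he !(comp_graded (hG' 0) hGA0 (bhom_add _ _ _ _ _ hee') ge') comp_comp // eqxx.
- by move=> n; apply: (hz_graded (gb' n) (gb n) (hb n)).
- move=> n x; apply: (comp_ext (hG n)) => i.
  rewrite comp_hz // ?(bhom0 (hb _)) //.
  rewrite (comp_graded (hG n) (hG' n) (bhom_add _ _ _ _ _ (hbp n)) (gpsi n)).
  by rewrite hr comp_comp // eqxx.
Qed.
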